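(* For fixed positive integers $x$ and $y$, the expected number of edges in the task-dependency graph resulting from the $(x,y)$ edge-addition process on $n$ vertices is $\Theta(n^2)$ as $n\to\infty$, where the constant in the lower bound depends on $(x,y)$.
   Context: A task-dependency graph is a finite directed acyclic graph (no loops, no multiple edges). A vertex is initial if it has in-degree $0$ and terminal if it has out-degree $0$ (an isolated vertex is both). An $(x,y)$ task-dependency graph has exactly $x$ initial and exactly $y$ terminal vertices. The $(x,y)$ edge-addition process on $n$ vertices: start with the empty graph on $\{1,\dots,n\}$ and repeatedly add, uniformly at random, an edge $(a,b)$ with $a<b$ not yet present; if an addition would cause fewer than $x$ initial vertices or fewer than $y$ terminal vertices, it is cancelled. The process halts if the graph after some edge addition is an $(x,y)$ task-dependency graph, or if no more edges can be added; the result is the final graph. *)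

(* Defs.v *)
From mathcomp Require Import all_boot all_order all_algebra.
Set Implicit Arguments. Unset Strict Implicit. Unset Printing Implicit Defensive.
Import Order.TTheory GRing.Theory Num.Theory.

(* Graphs on vertex set 'I_n (vertices 1..n shifted to 0..n-1), edge set a
   set of ordered pairs (a,b); the process only ever adds pairs with a < b,
   so every graph it produces is a DAG without loops or multiple edges. *)

Section TDG.
Variable n : nat.
Notation graph := {set 'I_n * 'I_n}.

Definition all_edges : graph := [set e : 'I_n * 'I_n | (e.1 < e.2)%N].

Definition is_initial (G : graph) (v : 'I_n) := [forall u, (u, v) \notin G].
Definition is_terminal (G : graph) (v : 'I_n) := [forall w, (v, w) \notin G].
Definition n_initial (G : graph) := #|[set v | is_initial G v]|.
Definition n_terminal (G : graph) := #|[set v | is_terminal G v]|.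

Definition is_xy_tdg (x y : nat) (G : graph) :=
  (n_initial G == x) && (n_terminal G == y).

(* edges not yet present whose addition is not cancelled *)
Definition addable (x y : nat) (G : graph) : graph :=
  [set e in all_edges | [&& e \notin G, x <= n_initial (e |: G)
                          & y <= n_terminal (e |: G)]].

(* Expected number of edges of the final graph of the (x,y) edge-addition
   process started from the state G (which is assumed to have been reached
   after at least one edge addition iff G is nonempty), with fuel k.
   A uniformly random not-present edge, redrawn whenever the addition is
   cancelled, is the same as a uniformly random addable edge (cancellation
   is permanent). *)
Fixpoint exp_final_edges (x y k : nat) (G : graph) : rat :=
  match k with
  | 0 => (#|G|)%:R%R
  | k'.+1 =>
      if (G != set0) && is_xy_tdg x y G then (#|G|)%:R%R
      else if addable x y G == set0 then (#|G|)%:R%R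
      else ((\sum_(e in addable x y G) exp_final_edges x y k' (e |: G))
              / (#|addable x y G|)%:R)%R
  end.

End TDG.

(* Expected number of edges of the final graph of the (x,y) edge-addition
   process on n vertices.  Fuel n*n suffices: each step adds a new edge and
   there are fewer than n*n possible edges. *)
Definition expected_edges (x y n : nat) : rat :=
  exp_final_edges x y (n * n) (set0 : {set 'I_n * 'I_n}).

(* Main.v *)
Require Import Defs.
From mathcomp Require Import all_boot all_order all_algebra.
From mathcomp Require Import zify ring lra.
Import Order.TTheory GRing.Theory Num.Theory.
Local Open Scope ring_scope.

Lemma avg_ge (T : finType) (A : {set T}) (f : T -> rat) b :
  A != set0 -> (forall e, e \in A -> b <= f e) ->
  b <= (\sum_(e in A) f e) / #|A|%:R.
Proof.
move=> hA hf; have h0 : (0 : rat) < #|A|%:R by rewrite ltr0n card_gt0.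
rewrite ler_pdivlMr // mulr_natr -sumr_const; exact: ler_sum.
Qed.

Lemma avg_le (T : finType) (A : {set T}) (f : T -> rat) b :
  A != set0 -> (forall e, e \in A -> f e <= b) ->
  (\sum_(e in A) f e) / #|A|%:R <= b.
Proof.
move=> hA hf; have h0 : (0 : rat) < #|A|%:R by rewrite ltr0n card_gt0.
rewrite ler_pdivrMr // mulr_natr -sumr_const; exact: ler_sum.
Qed.

Lemma card_lt (n k : nat) : (k <= n)%N -> #|[set v : 'I_n | (v < k)%N]| = k.
Proof.
move=> hk.
have -> : [set v : 'I_n | (v < k)%N] = [set widen_ord hk i | i in [set: 'I_k]].
  apply/setP => v; rewrite inE; apply/idP/imsetP.
  - move=> hv; exists (Ordinal hv); first by rewrite inE.
    by apply: val_inj.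
  - by case=> i _ ->; rewrite /= ltn_ord.
rewrite card_imset ?cardsT ?card_ord //.
by move=> i j /(congr1 val) /= /val_inj.
Qed.

Section S.
Variables (n x y : nat).
Local Notation graph := {set 'I_n * 'I_n}.

Lemma card_graph (G : graph) : (#|G| <= n * n)%N.
Proof. by rewrite (leq_trans (max_card _)) // card_prod card_ord. Qed.

Lemma efe_le k (G : graph) : exp_final_edges x y k G <= (n * n)%:R.
Proof.
elim: k G => [|k IH] G /=; first by rewrite ler_nat card_graph.
case: ifP => _; first by rewrite ler_nat card_graph.
case: ifP => hA; first by rewrite ler_nat card_graph.
by apply: avg_le => [|e _]; [rewrite hA | exact: IH].
Qed.

Lemma efe_ge k (G : graph) : (#|G|)%:R <= exp_final_edges x y k G.
Proof.
elim: k G => [|k IH] G //=.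
case: ifP => _ //; case: ifP => hA //.
apply: avg_ge => [|e]; first by rewrite hA.
rewrite inE => /andP [_ /and3P [he _ _]].
apply: le_trans (IH _); rewrite ler_nat cardsU1 he; exact: leqnSn.
Qed.
End S.

Lemma cardU_le (T : finType) (A B : {set T}) : (#|A :|: B| <= #|A| + #|B|)%N.
Proof. by rewrite cardsU leq_subr. Qed.

Lemma arith (mm NN j t a2 : rat) : 0 <= t -> t <= mm -> 0 <= a2 -> NN <= t + a2 + j ->
  (mm * j + NN) * (t + a2) <= (j + 1) * t * (mm + 1) + (mm * (j + 1) + NN) * a2.
Proof.
move=> h1 h2 h3 h4.
have h5 : 0 <= t * (t + a2 + j - NN) by apply: mulr_ge0; lra.
have h6 : 0 <= (mm - t) * (t + a2) by apply: mulr_ge0; lra.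
nra.
Qed.
Lemma fin_ineq (mm NN j t a2 : nat) : (t <= mm)%N -> (NN <= t + a2 + j)%N ->
  ((mm%:R * j%:R + NN%:R)/(mm%:R+1)) * (t+a2)%:R <=
  (j.+1)%:R *+ t + ((mm%:R * (j.+1)%:R + NN%:R)/(mm%:R+1) : rat) *+ a2.
Proof.
move=> h1 h2.
have hm : (0 : rat) < mm%:R + 1 by rewrite ltr_wpDl // ler0n.
have e1 : forall X Y : rat, X / (mm%:R + 1) * Y = (X * Y) / (mm%:R + 1).
  by move=> X Y; rewrite mulrAC.
have e2 : forall X Y : rat, (X / (mm%:R + 1) * Y) * (mm%:R + 1) = X * Y.
  by move=> X Y; rewrite mulrAC divfK // gt_eqF.
rewrite -(mulr_natr _ t) -(mulr_natr _ a2) e1 ler_pdivrMr // [X in _ <= X]mulrDl e2.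
have := @arith mm%:R NN%:R j%:R t%:R a2%:R.
rewrite !ler0n ler_nat h1 -!natrD ler_nat h2 => /(_ isT isT isT isT).
rewrite !natrD -natr1.
set M := mm%:R; set J := j%:R; set Tt := t%:R; set A2 := a2%:R; set Nn := NN%:R.
move=> H; nra.
Qed.

Section Main.
Variables (n x y : nat).
Hypotheses (hxn : (x < n)%N) (hyn : (y < n)%N).
Local Notation graph := {set 'I_n * 'I_n}.

Definition D : {set 'I_n} := [set v : 'I_n | (v < x.+1)%N].
Definition E : {set 'I_n} := (@rev_ord n) @^-1: [set v : 'I_n | (v < y.+1)%N].
Definition T : graph := [set e | (e.2 \in D) || (e.1 \in E)].
Definition Tfree (G : graph) := forall e, e \in G -> e \notin T.

Lemma cardD : #|D| = x.+1. Proof. exact: card_lt. Qed.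
Lemma cardE : #|E| = y.+1.
Proof. by rewrite /E card_preimset ?card_lt //; exact: rev_ord_inj. Qed.

Lemma init_e (G : graph) e : Tfree G -> D :\ e.2 \subset [set v | is_initial (e |: G) v].
Proof.
move=> hT; apply/subsetP => v; rewrite !inE => /andP [hv hD].
apply/forallP => u; rewrite !inE; apply/negP => /orP [/eqP he | hG].
  by rewrite -he eqxx in hv.
by move: (hT _ hG); rewrite !inE /= hD.
Qed.

Lemma term_e (G : graph) e : Tfree G -> E :\ e.1 \subset [set v | is_terminal (e |: G) v].
Proof.
move=> hT; apply/subsetP => v; rewrite !inE => /andP [hv hE].
apply/forallP => w; rewrite !inE; apply/negP => /orP [/eqP he | hG].
  by rewrite -he eqxx in hv.
by move: (hT _ hG); rewrite !inE /= hE orbT.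
Qed.

Lemma init_G (G : graph) : Tfree G -> D \subset [set v | is_initial G v].
Proof.
move=> hT; apply/subsetP => v; rewrite !inE => hD.
apply/forallP => u; apply/negP => hG.
by move: (hT _ hG); rewrite !inE /= hD.
Qed.

Lemma addable_all (G : graph) e : Tfree G -> e \in all_edges n -> e \notin G ->
  e \in addable x y G.
Proof.
move=> hT he hG; rewrite inE he hG /=; apply/andP; split.
  have h : (#|D :\ e.2| <= n_initial (e |: G))%N := subset_leq_card (@init_e G e hT).
  have h2 : #|D| = ((e.2 \in D) + #|D :\ e.2|)%N := cardsD1 _ _; rewrite cardD in h2.
  apply: leq_trans h.
  by move: h2; case: (e.2 \in D) => /= h2; lia.
have h : (#|E :\ e.1| <= n_terminal (e |: G))%N := subset_leq_card (@term_e G e hT).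
have h2 : #|E| = ((e.1 \in E) + #|E :\ e.1|)%N := cardsD1 _ _; rewrite cardE in h2.
apply: leq_trans h.
by move: h2; case: (e.1 \in E) => /= h2; lia.
Qed.

Lemma not_tdg (G : graph) : Tfree G -> ~~ is_xy_tdg x y G.
Proof.
move=> hT; rewrite /is_xy_tdg negb_and; apply/orP; left.
have h : (#|D| <= n_initial G)%N := subset_leq_card (@init_G G hT).
rewrite cardD in h.
by apply/eqP => he; rewrite he ltnn in h.
Qed.

Definition m := (x.+1 * x.+1 + y.+1 * y.+1)%N.

Lemma card_AT (G : graph) : (#|addable x y G :&: T| <= m)%N.
Proof.
have hs : addable x y G :&: T \subset setX D D :|: setX E E.
  apply/subsetP => [[a b]] /setIP [hA hTe].
  move: hA; rewrite inE => /andP [hab _]; move: hab; rewrite inE /= => hab.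
  move: hTe; rewrite /T inE /= => /orP [hb | ha]; apply/setUP.
    left; apply/setXP; split => //; move: hb; rewrite /D !inE => hb.
    exact: leq_trans hab (ltnW hb).
  right; apply/setXP; split => //; move: ha; rewrite /E !inE /= => ha.
  exact: leq_ltn_trans (leq_sub2l n (leqW hab)) ha.
have h1 : (#|addable x y G :&: T| <= #|setX D D :|: setX E E|)%N := subset_leq_card hs.
have h2 : (#|setX D D :|: setX E E| <= #|setX D D| + #|setX E E|)%N := @cardU_le _ _ _.
rewrite !cardsX cardD cardE in h2; exact: leq_trans h1 h2.
Qed.

Lemma card_diff (G : graph) : Tfree G -> (#|all_edges n| <= #|addable x y G| + #|G|)%N.
Proof.
move=> hT; apply: leq_trans (@cardU_le _ _ _).
apply: subset_leq_card; apply/subsetP => e he; rewrite inE.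
case hG: (e \in G); first by rewrite orbT.
by rewrite addable_all // hG.
Qed.

Definition N := #|all_edges n|.
Definition phi (j : nat) : rat := (m%:R * j%:R + N%:R) / (m%:R + 1).



Lemma phi_le j : (N <= j)%N -> phi j <= j%:R.
Proof.
move=> h; rewrite /phi ler_pdivrMr; last by rewrite ltr_wpDl // ler0n.
rewrite -natrM -natrD natr1 -natrM ler_nat; nia.
Qed.

Lemma key k (G : graph) : Tfree G -> (N <= #|G| + k)%N ->
  phi #|G| <= exp_final_edges x y k G.
Proof.
elim: k G => [|k IH] G hT hN /=.
  by apply: phi_le; rewrite addn0 in hN.
rewrite (negbTE (@not_tdg G hT)) andbF.
case: ifP => hA.
  apply: phi_le; have := @card_diff G hT; by rewrite (eqP hA) cards0.
set A := addable x y G.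
rewrite (bigID (fun e => e \in T)) /=.
have -> : \sum_(i in A | i \in T) exp_final_edges x y k (i |: G) =
   \sum_(i in A :&: T) exp_final_edges x y k (i |: G).
  by apply: eq_bigl => e; rewrite in_setI.
have -> : \sum_(i in A | i \notin T) exp_final_edges x y k (i |: G) =
   \sum_(i in A :\: T) exp_final_edges x y k (i |: G).
  by apply: eq_bigl => e; rewrite in_setD andbC.
have cardU e : e \in A -> #|e |: G| = #|G|.+1.
  by rewrite inE => /andP [_ /and3P [he _ _]]; rewrite cardsU1 he.
have s1 : (#|G|.+1)%:R *+ #|A :&: T| <= \sum_(i in A :&: T) exp_final_edges x y k (i |: G).
  rewrite -sumr_const; apply: ler_sum => e; rewrite inE => /andP [he _].
  by rewrite -(cardU e he) efe_ge.
have s2 : phi (#|G|.+1) *+ #|A :\: T| <= \sum_(i in A :\: T) exp_final_edges x y k (i |: G).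
  rewrite -sumr_const; apply: ler_sum => e; rewrite inE => /andP [heT he].
  rewrite -(cardU e he); apply: IH; last by rewrite cardU // addSnnS.
  move=> e'; rewrite in_setU1 => /orP [/eqP -> // | ]; exact: hT.
have hcard := cardsID T A.
have hpos : (0 : rat) < #|A|%:R by rewrite ltr0n card_gt0 hA.
rewrite ler_pdivlMr //.
apply: le_trans (lerD s1 s2).
have hmt := card_AT G.
have hd := @card_diff G hT.
rewrite /phi -hcard; apply: fin_ineq => //.
by rewrite /A -hcard in hd; rewrite -/N; move: hd; rewrite /N -addnA.
Qed.
End Main.

Lemma N_lower n : (n * n <= 2 * #|all_edges n| + n)%N.
Proof.
set L := all_edges n.
pose sw := fun e : 'I_n * 'I_n => (e.2, e.1).
have swi : injective sw by move=> [a b] [c d] [-> ->].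
have hR : #|sw @^-1: L| = #|L| := card_preimset _ swi.
pose dg := fun i : 'I_n => (i, i).
have dgi : injective dg by move=> a b [->].
have hD : #|dg @: [set: 'I_n]| = n by rewrite card_imset // cardsT card_ord.
have hs : [set: 'I_n * 'I_n] \subset L :|: sw @^-1: L :|: dg @: [set: 'I_n].
  apply/subsetP => [[a b]] _; rewrite /L !inE /=.
  case: ltngtP => h //.
  rewrite /=; apply/imsetP; exists a; first by rewrite inE.
  by rewrite /dg (val_inj h).
have h1 : (#|[set: 'I_n * 'I_n]| <= #|L :|: sw @^-1: L :|: dg @: [set: 'I_n]|)%N := subset_leq_card hs.
have h2 := @cardU_le _ (L :|: sw @^-1: L) (dg @: [set: 'I_n]).
have h3 := @cardU_le _ L (sw @^-1: L).
rewrite cardsT card_prod card_ord in h1.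
rewrite hR hD in h2 h3.
lia.
Qed.

Theorem mainTheorem15 (x y : nat) (hx : (0 < x)%N) (hy : (0 < y)%N) :
  exists (c C : rat), 0 < c /\ 0 < C /\
    exists N : nat, forall n : nat, (N <= n)%N ->
      c * (n%:R ^+ 2) <= expected_edges x y n /\
      expected_edges x y n <= C * (n%:R ^+ 2).
Proof.
pose M : rat := (m x y)%:R + 1.
have hM : 0 < M by rewrite /M ltr_wpDl // ler0n.
exists (4 * M)^-1, 1; split; first by rewrite invr_gt0 mulr_gt0.
split => //; exists (x + y + 2)%N => n hn; split; last first.
  by rewrite mul1r /expected_edges expr2 -natrM efe_le.
have hxn : (x < n)%N by lia.
have hyn : (y < n)%N by lia.
have hT : @Tfree n x y (set0 : {set 'I_n * 'I_n}) by move=> e; rewrite inE.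
have hN : (N n <= #|(set0 : {set 'I_n * 'I_n})| + n * n)%N.
  by rewrite cards0 add0n /N card_graph.
have := @key n x y hxn hyn (n * n) _ hT hN.
rewrite /expected_edges cards0 /phi mulr0 add0r => hk.
apply: le_trans hk.
have hNl := N_lower n.
have h4 : (n * n <= 4 * N n)%N by rewrite /N; nia.
rewrite ler_pdivlMr // -/M.
have -> : (4 * M)^-1 * n%:R ^+ 2 * M = (n * n)%:R / 4.
  rewrite natrM expr2; field; rewrite gt_eqF //.
rewrite ler_pdivrMr // -natrM ler_nat; lia.
Qed.
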